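(* Let $n\in\mathbb{N}$. (i) The map $\mathcal{T}_n:\mathcal{RBC}_n\to\mathcal{P}(\Theta)$ is continuous when $\mathcal{P}(\Theta)$ carries the weak topology. (ii) For every $p\in[1,\infty)$, the map $\mathcal{T}_n:\mathcal{RBC}_n\to\mathcal{P}_p(\Theta)$ is continuous when $\mathcal{P}_p(\Theta)$ carries the topology whose neighborhood basis at $G_0$ consists of sets $\{G:|\int f_i\,d(G-G_0)|<\varepsilon_i,\ i=1,\ldots,m\}$, possibly intersected with $\{G:|\int|\theta|^p\,d(G-G_0)(\theta)|<\varepsilon_0\}$, for bounded continuous $f_i$ and $\varepsilon_i>0$.
   Context: $\Theta\subseteq\mathbb{R}$ is $\mathbb{R}$, a closed half-line, or a compact interval with nonempty interior; $\mathcal{P}(\Theta)$ and $\mathcal{P}_p(\Theta)$ are Borel probability measures on $\Theta$ (resp. with finite $p$-th moment). SBA of a measure $G$ with finite mean: $\mu_{1,1}=\int\theta\,dG$; $\mu_{j,2l}=\mu_{j-1,l}$, $\mu_{j,2l-1}=b_G(\mu_{j-1,l-1},\mu_{j-1,l}]$ where $b_G(a_1,a_2]=\int_{(a_1,a_2]}\theta\,dG/(G(a_2)-G(a_1))$ (or $a_1$ if the mass is zero), $\mu_{j,0}=\inf\Theta$, $\mu_{j,2^j}=\sup\Theta$; $G$ has a regular level $n$ SBA if $\mu_{n,1},\ldots,\mu_{n,2^n-1}$ are distinct. $\mathcal{RBC}_n$ is the set of arrays $(\mu_{j,l})_{1\le j\le n+1,1\le l\le 2^j-1}$ consisting of the first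 $n+1$ rows of the SBA of some measure with a regular level $n$ SBA, with the subspace topology of Euclidean space. $\mathcal{T}_n$ maps such an array to $\sum_{l=1}^{2^n}w_{n,l}\delta_{\mu_{n+1,2l-1}}$ with $w_{n,l}=F(\mu_{n,l})-F(\mu_{n,l-1})$, where $F(\mu_{j,0})=0$, $F(\mu_{j,2^j})=1$, $F(\mu_{j,2l})=F(\mu_{j-1,l})$ and, for $1\le j\le n$, $F(\mu_{j,2l-1})=F(\mu_{j-1,l-1})+[F(\mu_{j-1,l})-F(\mu_{j-1,l-1})]\frac{\mu_{j+1,4l-1}-\mu_{j+1,4l-2}}{\mu_{j+1,4l-1}-\mu_{j+1,4l-3}}$ ($0/0=1$). *)

(* Defs.v *)
From HB Require Import structures.
From mathcomp Require Import all_boot all_order all_algebra.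
From mathcomp Require Import all_classical all_reals all_analysis.
Set Implicit Arguments. Unset Strict Implicit. Unset Printing Implicit Defensive.
Import Order.TTheory GRing.Theory Num.Theory.
Import numFieldNormedType.Exports.
Local Open Scope classical_set_scope.
Local Open Scope ring_scope.

Section Defs.
Variable R : realType.

Definition admissible_Theta (Th : set R) : Prop :=
  Th = setT
  \/ (exists a : R, Th = [set x | a <= x])
  \/ (exists a : R, Th = [set x | x <= a])
  \/ (exists a b : R, a < b /\ Th = [set x | a <= x <= b]).

Definition infTh (Th : set R) : \bar R := ereal_inf (EFin @` Th).
Definition supTh (Th : set R) : \bar R := ereal_sup (EFin @` Th).

Variable G : probability R R.

Definition ocI (a1 a2 : \bar R) : set R := [set x | (a1 < x%:E)%E /\ (x%:E <= a2)%E].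

Definition bG (a1 a2 : \bar R) : \bar R :=
  if G (ocI a1 a2) == 0%E then a1
  else (fine (\int[G]_(x in ocI a1 a2) x%:E) / fine (G (ocI a1 a2)))%:E.

(* SBA: sba Th j l = mu_{j,l}, for j >= 1 and 0 <= l <= 2^j *)
Fixpoint sba (Th : set R) (j : nat) : nat -> \bar R :=
  match j with
  | 0 => fun _ => 0%E
  | j'.+1 =>
    match j' with
    | 0 => fun l => if l == 0%N then infTh Th else if l == 1%N then
                     (\int[G]_x x%:E)%E else supTh Th
    | _ => fun l =>
      if l == 0%N then infTh Th
      else if l == (2 ^ j)%N then supTh Th
      else if odd l then bG (sba Th j' l./2) (sba Th j' (l./2).+1)
      else sba Th j' l./2
    end
  end.
End Defs.

Section Defs2.
Variable R : realType.

Definition has_support (Th : set R) (G : probability R R) : Prop :=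
  G (~` Th) = 0%E.

Definition finite_mean (G : probability R R) : Prop :=
  G.-integrable setT (fun x : R => x%:E).

Definition regular_SBA (Th : set R) (G : probability R R) (n : nat) : Prop :=
  forall l1 l2 : nat, (0 < l1 < 2 ^ n)%N -> (0 < l2 < 2 ^ n)%N -> l1 != l2 ->
    sba G Th n l1 != sba G Th n l2.

(* arrays (mu_{j,l})_{1<=j<=n+1, 1<=l<=2^j-1}, stored as x j l *)
Definition RBC (Th : set R) (n : nat) (x : nat -> nat -> R) : Prop :=
  exists G : probability R R,
    [/\ has_support Th G, finite_mean G, regular_SBA Th G n &
      forall j l : nat, (1 <= j <= n.+1)%N -> (1 <= l < 2 ^ j)%N ->
        sba G Th j l = (x j l)%:E].

Definition arr_dist (n : nat) (x y : nat -> nat -> R) : R :=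
  Num.sqrt (\sum_(1 <= j < n.+2) \sum_(1 <= l < 2 ^ j) (x j l - y j l) ^+ 2).

Definition ratio00 (a b : R) : R := if (a == 0) && (b == 0) then 1 else a / b.

(* Fw x j l = F(mu_{j,l}) *)
Fixpoint Fw (x : nat -> nat -> R) (j : nat) : nat -> R :=
  match j with
  | 0 => fun l => if l == 0%N then 0 else 1
  | j'.+1 => fun l =>
    if l == 0%N then 0
    else if l == (2 ^ j)%N then 1
    else if odd l then
      let l' := (l./2).+1 in
      Fw x j' (l' - 1) + (Fw x j' l' - Fw x j' (l' - 1)) *
        ratio00 (x j.+1 (4 * l' - 1)%N - x j.+1 (4 * l' - 2)%N)
                (x j.+1 (4 * l' - 1)%N - x j.+1 (4 * l' - 3)%N)
    else Fw x j' l./2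
  end.

Definition Tweight (n : nat) (x : nat -> nat -> R) (l : nat) : R :=
  Fw x n l - Fw x n (l - 1).

Definition Tatom (n : nat) (x : nat -> nat -> R) (l : nat) : R :=
  x n.+1 (2 * l - 1)%N.

(* integral of f against T_n(x) = sum_{l=1}^{2^n} w_{n,l} delta_{mu_{n+1,2l-1}} *)
Definition Tint (n : nat) (x : nat -> nat -> R) (f : R -> R) : R :=
  \sum_(1 <= l < (2 ^ n).+1) Tweight n x l * f (Tatom n x l).

Definition bounded_on (Th : set R) (f : R -> R) : Prop :=
  exists M : R, forall t, Th t -> `|f t| <= M.

End Defs2.

(* Main.v *)
Require Import Defs.
From HB Require Import structures.
From mathcomp Require Import all_boot all_order all_algebra.
From mathcomp Require Import all_classical all_reals all_analysis.
From mathcomp Require Import measurable_realfun.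
From mathcomp Require Import zify ring lra.
Import Order.TTheory GRing.Theory Num.Theory.
Import numFieldNormedType.Exports.
Local Open Scope classical_set_scope.
Local Open Scope ring_scope.
Set Implicit Arguments. Unset Strict Implicit.

Section Meas.
Variable R : realType.
Variable Th : set R.
Hypothesis adm : admissible_Theta Th.

Lemma Th_closed : closed Th.
Proof.
case: adm => [->|[[a ->]|[[a ->]|[a [b [_ ->]]]]]].
- exact: closedT.
- exact: closed_ge.
- exact: closed_le.
- have -> : [set x : R | a <= x <= b] = [set x | a <= x] `&` [set x | x <= b].
    by apply/seteqP; split => x /=; [move/andP|move=> [-> ->]].
  apply: closedI; [exact: closed_ge|exact: closed_le].
Qed.

Lemma Th_meas : measurable Th.
Proof. apply: closed_measurable; exact: Th_closed. Qed.

Lemma Th_ne : exists t, Th t.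
Proof.
case: adm => [->|[[a ->]|[[a ->]|[a [b [ab ->]]]]]].
- by exists 0.
- by exists a => /=.
- by exists a => /=.
- by exists a => /=; rewrite lexx ltW.
Qed.

Lemma Th_mem (t : R) : (infTh Th <= t%:E)%E -> (t%:E <= supTh Th)%E -> Th t.
Proof.
rewrite /infTh /supTh.
case: adm => [->|[[a ->]|[[a ->]|[a [b [ab ->]]]]]] //= hi hs.
- have : (a%:E <= ereal_inf (EFin @` [set x | (a <= x)%R]))%E.
    by apply: le_ereal_inf_tmp => _ [y /= ay <-]; rewrite lee_fin.
  by move=> /le_trans /(_ hi); rewrite lee_fin.
- have : (ereal_sup (EFin @` [set x | (x <= a)%R]) <= a%:E)%E.
    by apply: ge_ereal_sup => _ [y /= ay <-]; rewrite lee_fin.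
  by move: hs => /le_trans H /H; rewrite lee_fin.
- have : (a%:E <= ereal_inf (EFin @` [set x | (a <= x <= b)%R]))%E.
    by apply: le_ereal_inf_tmp => _ [y /= /andP[ay _] <-]; rewrite lee_fin.
  move=> /le_trans /(_ hi); rewrite lee_fin => ->.
  have : (ereal_sup (EFin @` [set x | (a <= x <= b)%R]) <= b%:E)%E.
    by apply: ge_ereal_sup => _ [y /= /andP[_ ay] <-]; rewrite lee_fin.
  by move: hs => /le_trans H /H; rewrite lee_fin.
Qed.

Variable G : probability R R.
Hypothesis supp : has_support Th G.
Hypothesis fm : finite_mean G.

Lemma ocI_meas (a1 a2 : \bar R) : measurable (ocI a1 a2).
Proof.
have -> : ocI a1 a2 = EFin @^-1` [set` Interval (BRight a1) (BRight a2)].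
  apply/seteqP; split => x /=; rewrite /ocI /= in_itv /=.
    by case=> -> ->.
  by move/andP.
rewrite -[X in measurable X]setTI.
apply: (EFin_measurable measurableT) => //; exact: emeasurable_itv.
Qed.

Lemma lower_int (A : set R) (c : R) : measurable A ->
  (forall t, A t -> Th t -> c <= t) ->
  (c%:E * G A <= \int[G]_(x in A) x%:E)%E.
Proof.
move=> mA Hc.
have mC : measurable (~` Th) by apply: measurableC; exact: Th_meas.
have iA : G.-integrable A (fun x => x%:E).
  exact: (integrableS measurableT).
rewrite -(integral_cst G mA).
rewrite (negligible_integral mC mA) //; last first.
  exact: finite_measure_integrable_cst.
rewrite [X in (_ <= X)%E](negligible_integral mC mA) //.
apply: le_integral.
- exact: measurableD.
- exact (finite_measure_integrable_cst G c (measurableD mA mC)).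
- by apply: (integrableS mA (measurableD mA mC)) => //; exact: subDsetl.
- move=> t /set_mem [At /= nt]; rewrite lee_fin; apply: Hc => //.
  by apply: contrapT.
Qed.

Lemma upper_int (A : set R) (c : R) : measurable A ->
  (forall t, A t -> Th t -> t <= c) ->
  (\int[G]_(x in A) x%:E <= c%:E * G A)%E.
Proof.
move=> mA Hc.
have mC : measurable (~` Th) by apply: measurableC; exact: Th_meas.
have iA : G.-integrable A (fun x => x%:E).
  exact: (integrableS measurableT).
rewrite -(integral_cst G mA).
rewrite [X in (_ <= X)%E](negligible_integral mC mA) //; last first.
  exact: finite_measure_integrable_cst.
rewrite (negligible_integral mC mA) //.
apply: le_integral.
- exact: measurableD.
- by apply: (integrableS mA (measurableD mA mC)) => //; exact: subDsetl.
- exact (finite_measure_integrable_cst G c (measurableD mA mC)).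
- move=> t /set_mem [At /= nt]; rewrite lee_fin; apply: Hc => //.
  by apply: contrapT.
Qed.


Lemma GA_pos (A : set R) : measurable A -> G A != 0%E ->
  (0 < fine (G A)) /\ G A = (fine (G A))%:E.
Proof.
move=> mA GA0.
have h1 : (G A <= 1)%E by exact: probability_le1.
have h0 : (0 <= G A)%E by exact: measure_ge0.
have fA : G A \is a fin_num by rewrite ge0_fin_numE // (le_lt_trans h1) // ltry.
split; last by rewrite fineK.
rewrite -lte_fin fineK // lt_def GA0 h0 //.
Qed.

Lemma intA_fin (A : set R) : measurable A ->
  (\int[G]_(x in A) x%:E = (fine (\int[G]_(x in A) x%:E))%:E)%E.
Proof.
move=> mA; rewrite fineK //; apply: integrable_fin_num.
  exact: mA.
exact: (integrableS measurableT mA _ fm).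
Qed.

Lemma mean_lo (A : set R) (lo : \bar R) : measurable A -> G A != 0%E ->
  (forall t, A t -> Th t -> (lo <= t%:E)%E) ->
  (lo <= (fine (\int[G]_(x in A) x%:E) / fine (G A))%:E)%E.
Proof.
move=> mA GA0 Hlo; have [gp gE] := GA_pos mA GA0.
case: lo Hlo => [r| |] Hlo.
- rewrite lee_fin ler_pdivlMr //.
  have := lower_int (c := r) mA.
  rewrite [G A]gE (intA_fin mA) -EFinM lee_fin; apply => t At Tt.
  by rewrite -lee_fin; apply: Hlo.
- exfalso; move/negP: GA0; apply; rewrite eq_le measure_ge0 andbT.
  rewrite -supp; apply: le_measure; rewrite ?inE //.
  + by apply: measurableC; exact: Th_meas.
  + by move=> t At Tt; have := Hlo t At Tt; rewrite leNgt ltey.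
- exact: leNye.
Qed.

Lemma mean_up (A : set R) (up : \bar R) : measurable A -> G A != 0%E ->
  (forall t, A t -> Th t -> (t%:E <= up)%E) ->
  ((fine (\int[G]_(x in A) x%:E) / fine (G A))%:E <= up)%E.
Proof.
move=> mA GA0 Hup; have [gp gE] := GA_pos mA GA0.
case: up Hup => [r| |] Hup.
- rewrite lee_fin ler_pdivrMr //.
  have := upper_int (c := r) mA.
  rewrite [G A]gE (intA_fin mA) -EFinM lee_fin; apply => t At Tt.
  by rewrite -lee_fin; apply: Hup.
- exact: leey.
- exfalso; move/negP: GA0; apply; rewrite eq_le measure_ge0 andbT.
  rewrite -supp; apply: le_measure; rewrite ?inE //.
  + by apply: measurableC; exact: Th_meas.
  + by move=> t At Tt; have := Hup t At Tt; rewrite leNgt ltNye.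
Qed.

Lemma bG_bounds (a1 a2 : \bar R) : (a1 <= a2)%E ->
  (a1 <= bG G a1 a2)%E /\ (bG G a1 a2 <= a2)%E.
Proof.
move=> a12; rewrite /bG; case: ifPn => [_|h]; first by split.
split.
- by apply: mean_lo => //; [exact: ocI_meas| move=> t [/ltW]].
- by apply: mean_up => //; [exact: ocI_meas| move=> t [_]].
Qed.

Lemma infTh_le t : Th t -> (infTh Th <= t%:E)%E.
Proof. by move=> Tt; apply: ereal_inf_lbound; exists t. Qed.

Lemma supTh_ge t : Th t -> (t%:E <= supTh Th)%E.
Proof. by move=> Tt; apply: ereal_sup_ubound; exists t. Qed.

Lemma mean_bounds :
  (infTh Th <= \int[G]_x x%:E)%E /\ (\int[G]_x x%:E <= supTh Th)%E.
Proof.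
have G1 : G setT != 0%E by rewrite probability_setT oner_neq0.
have E : (\int[G]_x x%:E = (fine (\int[G]_(x in setT) x%:E) / fine (G setT))%:E)%E.
  by rewrite probability_setT /= divr1 -intA_fin.
rewrite E; split.
- by apply: mean_lo => // t _ /infTh_le.
- by apply: mean_up => // t _ /supTh_ge.
Qed.

End Meas.

Section Sba.
Variable R : realType.
Variable Th : set R.
Variable G : probability R R.

Lemma sbaE j l : sba G Th j.+2 l =
  if l == 0%N then infTh Th else if l == (2 ^ j.+2)%N then supTh Th
  else if odd l then bG G (sba G Th j.+1 l./2) (sba G Th j.+1 (l./2).+1)
  else sba G Th j.+1 l./2.
Proof. by []. Qed.

Lemma sba_0 j : (0 < j)%N -> sba G Th j 0 = infTh Th.
Proof. by case: j => [//|[|j]]. Qed.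

Lemma sba_top j : (0 < j)%N -> sba G Th j (2 ^ j) = supTh Th.
Proof.
case: j => [//|[|j]] _ //.
by rewrite sbaE expn_eq0 /= eqxx.
Qed.

Lemma sba_even j k : (0 < j)%N -> (k <= 2 ^ j)%N ->
  sba G Th j.+1 k.*2 = sba G Th j k.
Proof.
case: j => [//|j] _ hk.
rewrite sbaE double_eq0.
case: eqP => [->|k0]; first by rewrite sba_0.
have [->|kn] := eqVneq k (2 ^ j.+1)%N.
  by rewrite -mul2n -expnS eqxx sba_top.
have -> : (k.*2 == 2 ^ j.+2)%N = false.
  by rewrite expnS mul2n -!muln2 eqn_mul2r /= (negbTE kn).
by rewrite odd_double doubleK.
Qed.

Lemma sba_odd j k : (0 < j)%N -> (k < 2 ^ j)%N ->
  sba G Th j.+1 k.*2.+1 = bG G (sba G Th j k) (sba G Th j k.+1).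
Proof.
case: j => [//|j] _ hk.
rewrite sbaE.
have -> : (k.*2.+1 == 2 ^ j.+2)%N = false.
  apply/negbTE; apply/negP => /eqP /(congr1 odd).
  by rewrite /= odd_double expnS oddM.
by rewrite /= odd_double /= uphalf_double.
Qed.

End Sba.

Section Sorted.
Variable R : realType.
Variable Th : set R.
Hypothesis adm : admissible_Theta Th.
Variable G : probability R R.
Hypothesis supp : has_support Th G.
Hypothesis fm : finite_mean G.

Lemma sba_sorted j : (0 < j)%N -> forall l, (l < 2 ^ j)%N ->
  (sba G Th j l <= sba G Th j l.+1)%E.
Proof.
elim: j => [//|j IH] _.
case: j IH => [_|j IH] l hl.
  have [mlo mup] := mean_bounds adm supp fm.
  by case: l hl => [|[|//]] _ /=.
have hk : (l./2 < 2 ^ j.+1)%N.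
  by rewrite -(ltn_pmul2l (isT : (0 < 2)%N)) -expnS mul2n; move: hl; rewrite -{1}(odd_double_half l); case: (odd l) => /= h; [apply: ltn_trans h|].
have IHk := IH isT _ hk.
have El := odd_double_half l.
case: (odd l) El => El; rewrite -El ?add0n ?add1n.
- rewrite -doubleS (sba_even Th G (isT : (0 < j.+1)%N) hk) (sba_odd Th G (isT : (0 < j.+1)%N) hk).
  by case: (bG_bounds adm supp fm IHk).
- rewrite (sba_even Th G (isT : (0 < j.+1)%N) (ltnW hk)) (sba_odd Th G (isT : (0 < j.+1)%N) hk).
  by case: (bG_bounds adm supp fm IHk).
Qed.

Lemma sba_mono j l1 l2 : (0 < j)%N -> (l1 <= l2)%N -> (l2 <= 2 ^ j)%N ->
  (sba G Th j l1 <= sba G Th j l2)%E.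
Proof.
move=> j0 h12; elim: l2 h12 => [|l2 IH]; first by rewrite leqn0 => /eqP ->.
rewrite leq_eqVlt => /orP[/eqP <- //|h] hl.
apply: le_trans (IH h (ltnW hl)) _.
exact: sba_sorted.
Qed.

Lemma sba_inTh j l : (1 <= j)%N -> (l <= 2 ^ j)%N -> forall r : R,
  sba G Th j l = r%:E -> Th r.
Proof.
move=> j0 hl r hr; apply: (Th_mem adm); rewrite -hr.
- by rewrite -(sba_0 Th G j0); apply: sba_mono.
- by rewrite -(sba_top Th G j0); apply: sba_mono.
Qed.

End Sorted.

Section Analytic.
Variable R : realType.
Variable T : Type.
Variable F : set_system T.
Hypothesis FF : Filter F.

Lemma ratio_cvg (fa fb : T -> R) a b : fa @ F --> a -> fb @ F --> b -> b != 0 ->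
  (fun x => ratio00 (fa x) (fb x)) @ F --> ratio00 a b.
Proof.
move=> ha hb b0.
have -> : ratio00 a b = a * b^-1 by rewrite /ratio00 (negbTE b0) andbF.
apply: (@cvg_trans _ ((fa \* (fun x => (fb x)^-1)) @ F)); last first.
  exact: cvgM ha (cvgV b0 hb).
apply: near_eq_cvg; have := (cvgr_neq0 b hb b0); move=> /(_ FF); apply: filterS => x hx.
by rewrite /ratio00 /= (negbTE hx) andbF.
Qed.

Lemma comp_within (Th : set R) (f : R -> R) (u : T -> R) u0 :
  {within Th, continuous f} -> u @ F --> u0 -> Th u0 ->
  (\forall x \near F, Th (u x)) -> (fun x => f (u x)) @ F --> f u0.
Proof.
move=> cf hu Tu0 Tu P /= Pn.
have : within Th (nbhs u0) (f @^-1` P).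
  rewrite (nbhs_subspace_in Tu0); exact: (cf u0 _ Pn).
rewrite /within /= => W.
have H1 : \forall x \near F, Th (u x) -> P (f (u x)) by exact: hu _ W.
by apply: filterS (filterI H1 Tu) => x [h1 h2]; exact: h1.
Qed.

Lemma ratio_bnd (u m v : R) : u <= m -> m <= v ->
  0 <= ratio00 (v - m) (v - u) <= 1.
Proof.
move=> um mv; rewrite /ratio00.
have [e|ne] := eqVneq (v - u) 0.
  have -> : v - m = 0.
    apply/eqP; rewrite subr_eq0 eq_le mv /= andbT.
    by have -> : v = u by apply/eqP; rewrite -subr_eq0 e.
  by rewrite eqxx /= ler01 lexx.
rewrite andbF.
have vu : 0 < v - u by rewrite lt_def ne subr_ge0 (le_trans um mv).
rewrite divr_ge0 ?subr_ge0 ?(ltW vu) //=.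
rewrite ler_pdivrMr // mul1r lerD2l lerN2 um //.
exact: le_trans um mv.
Qed.

Lemma pair_cvg (Th : set R) (f : R -> R) (D u m v : T -> R) (D0 u0 m0 v0 : R) :
  {within Th, continuous f} ->
  D @ F --> D0 -> u @ F --> u0 -> m @ F --> m0 -> v @ F --> v0 ->
  Th u0 -> Th v0 -> u0 <= m0 -> m0 <= v0 ->
  (\forall x \near F, [/\ Th (u x), Th (v x), u x <= m x & m x <= v x]) ->
  (fun x => D x * (ratio00 (v x - m x) (v x - u x) * f (u x) +
     (1 - ratio00 (v x - m x) (v x - u x)) * f (v x))) @ F -->
  D0 * (ratio00 (v0 - m0) (v0 - u0) * f u0 + (1 - ratio00 (v0 - m0) (v0 - u0)) * f v0).
Proof.
move=> cf hD hu hm hv Tu0 Tv0 um0 mv0 ev.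
have Tu : \forall x \near F, Th (u x) by apply: filterS ev => x [].
have Tv : \forall x \near F, Th (v x) by apply: filterS ev => x [].
have hfu := comp_within cf hu Tu0 Tu.
have hfv := comp_within cf hv Tv0 Tv.
apply: cvgM => //.
have [e|ne] := eqVneq (v0 - u0) 0; last first.
  have hr : (fun x => ratio00 (v x - m x) (v x - u x)) @ F -->
      ratio00 (v0 - m0) (v0 - u0).
    by apply: ratio_cvg => //; apply: cvgB.
  apply: cvgD; first exact: cvgM.
  by apply: cvgM => //; apply: cvgB => //; exact: cvg_cst.
have vu : v0 = u0 by apply/eqP; rewrite -subr_eq0 e.
have -> : ratio00 (v0 - m0) (v0 - u0) = 1.
  have -> : v0 - m0 = 0.
    by apply/eqP; rewrite subr_eq0 eq_le mv0 /= andbT vu.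
  by rewrite e /ratio00 eqxx.
rewrite mul1r subrr mul0r addr0.
apply/cvgrPdist_lt => eps eps0.
have /cvgrPdist_lt /(_ _ (divr_gt0 eps0 (ltr0Sn _ 1))) h1 := hfu.
have /cvgrPdist_lt /(_ _ (divr_gt0 eps0 (ltr0Sn _ 1))) h2 := hfv.
apply: filterS (filterI ev (filterI h1 h2)) => x [[_ _ ux mx] [h1x h2x]].
have /andP[r0 r1] := ratio_bnd ux mx.
set r := ratio00 _ _ in r0 r1 *.
have -> : f u0 - (r * f (u x) + (1 - r) * f (v x)) =
    r * (f u0 - f (u x)) + (1 - r) * (f v0 - f (v x)).
  by rewrite vu; ring.
apply: (le_lt_trans (ler_normD _ _)).
have r1' : 0 <= 1 - r by rewrite subr_ge0.
rewrite !normrM (ger0_norm r0) (ger0_norm r1').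
have -> : eps = eps / 2 + eps / 2 by rewrite -splitr.
apply: ltr_leD.
  apply: (le_lt_trans (ler_piMl _ r1)) => //.
apply: (le_trans (ler_piMl _ _)) => //.
  by rewrite lerBlDr lerDl.
exact: ltW.
Qed.

End Analytic.

Section FwLemmas.
Variable R : realType.
Implicit Types x : nat -> nat -> R.

Lemma FwE x j l : Fw x j.+1 l =
  if l == 0%N then 0 else if l == (2 ^ j.+1)%N then 1
  else if odd l then
    Fw x j (l./2.+1 - 1) + (Fw x j l./2.+1 - Fw x j (l./2.+1 - 1)) *
      ratio00 (x j.+2 (4 * l./2.+1 - 1)%N - x j.+2 (4 * l./2.+1 - 2)%N)
              (x j.+2 (4 * l./2.+1 - 1)%N - x j.+2 (4 * l./2.+1 - 3)%N)
  else Fw x j l./2.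
Proof. by []. Qed.

Lemma Fw_0 x j : Fw x j 0 = 0.
Proof. by case: j. Qed.

Lemma Fw_top x j : Fw x j (2 ^ j) = 1.
Proof.
case: j => [//|j]; rewrite FwE eqxx.
by have -> : (2 ^ j.+1 == 0)%N = false by rewrite expn_eq0.
Qed.

Lemma Fw_even x j k : (k <= 2 ^ j)%N -> Fw x j.+1 k.*2 = Fw x j k.
Proof.
move=> hk; rewrite FwE double_eq0.
case: eqP => [->|k0]; first by rewrite Fw_0.
have [->|kn] := eqVneq k (2 ^ j)%N.
  by rewrite -mul2n -expnS eqxx Fw_top.
have -> : (k.*2 == 2 ^ j.+1)%N = false.
  by rewrite expnS mul2n -!muln2 eqn_mul2r /= (negbTE kn).
by rewrite odd_double doubleK.
Qed.

Lemma Fw_odd x j k : (k < 2 ^ j)%N -> Fw x j.+1 k.*2.+1 =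
  Fw x j k + (Fw x j k.+1 - Fw x j k) *
    ratio00 (x j.+2 (4 * k + 3)%N - x j.+2 (4 * k + 2)%N)
            (x j.+2 (4 * k + 3)%N - x j.+2 (4 * k + 1)%N).
Proof.
move=> hk; rewrite FwE.
have -> : (k.*2.+1 == 2 ^ j.+1)%N = false.
  apply/negbTE; apply/negP => /eqP /(congr1 odd).
  by rewrite /= odd_double expnS oddM.
rewrite /= odd_double /=.
have -> : (uphalf k.*2).+1 = k.+1 by rewrite uphalf_double.
have -> : (k.+1 - 1 = k)%N by lia.
have -> : (4 * k.+1 - 1 = 4 * k + 3)%N by lia.
have -> : (4 * k.+1 - 2 = 4 * k + 2)%N by lia.
have -> : (4 * k.+1 - 3 = 4 * k + 1)%N by lia.
by [].
Qed.

Lemma sum_pair (h : nat -> R) m :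
  \sum_(1 <= l < (m.*2).+1) h l = \sum_(0 <= k < m) (h k.*2.+1 + h k.*2.+2).
Proof.
elim: m => [|m IH]; first by rewrite !big_geq.
rewrite doubleS big_nat_recr //= big_nat_recr //= IH big_nat_recr //= addrA.
by [].
Qed.

End FwLemmas.

Section SumCvg.
Variable R : realType.
Variable T : Type.
Variable F : set_system T.
Hypothesis FF : Filter F.

Lemma cvg_sum_nat (h : nat -> T -> R) (a : nat -> R) m :
  (forall k, (k < m)%N -> h k @ F --> a k) ->
  (fun x => \sum_(0 <= k < m) h k x) @ F --> \sum_(0 <= k < m) a k.
Proof.
elim: m => [|m IH] H.
  rewrite big_geq //.
  have -> : (fun x => \sum_(0 <= k < 0) h k x) = fun=> 0.
    by apply: funext => x; rewrite big_geq.
  exact: cvg_cst.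
rewrite big_nat_recr //=.
have -> : (fun x => \sum_(0 <= k < m.+1) h k x) =
    fun x => \sum_(0 <= k < m) h k x + h m x.
  by apply: funext => x; rewrite big_nat_recr.
apply: cvgD; first by apply: IH => k km; apply: H; lia.
exact: H.
Qed.

End SumCvg.

Section Main.
Variable R : realType.
Variable Th : set R.
Variable n : nat.
Variable x0 : nat -> nat -> R.
Variable F : set_system (nat -> nat -> R).
Hypothesis FF : Filter F.
Hypothesis hcoord : forall j l, (0 < j <= n.+1)%N -> (0 < l < 2 ^ j)%N ->
  (fun x => x j l) @ F --> x0 j l.
Hypothesis hreg : forall j a b, (0 < j <= n)%N -> (0 < a)%N -> (a < b)%N ->
  (b < 2 ^ j)%N -> x0 j a != x0 j b.

Definition goodrow (x : nat -> nat -> R) :=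
  (forall k, (0 < k < 2 ^ n.+1)%N -> Th (x n.+1 k)) /\
  (forall k, (0 < k)%N -> (k.+1 < 2 ^ n.+1)%N -> x n.+1 k <= x n.+1 k.+1).

Hypothesis hg0 : goodrow x0.
Hypothesis hgF : \forall x \near F, goodrow x.

Lemma Fw_cvg j l : (j < n)%N -> (l <= 2 ^ j)%N ->
  (fun x => Fw x j l) @ F --> Fw x0 j l.
Proof.
elim: j l => [|j IH] l jn hl.
  exact: cvg_cst.
have El := odd_double_half l.
case: (odd l) El => El; rewrite -El ?add0n ?add1n.
- have hk : (l./2 < 2 ^ j)%N.
    move: hl; rewrite -El expnS.
    have : (2 ^ j > 0)%N by rewrite expn_gt0.
    lia.
  rewrite (Fw_odd x0 hk).
  have -> : (fun x : nat -> nat -> R => Fw x j.+1 l./2.*2.+1) = (fun x => Fw x j l./2 +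
      (Fw x j l./2.+1 - Fw x j l./2) *
    ratio00 (x j.+2 (4 * l./2 + 3)%N - x j.+2 (4 * l./2 + 2)%N)
            (x j.+2 (4 * l./2 + 3)%N - x j.+2 (4 * l./2 + 1)%N)).
    by apply: funext => x; rewrite Fw_odd.
  have jn' : (j < n)%N by lia.
  have h1 := IH _ jn' (ltnW hk).
  have h2 := IH _ jn' hk.
  have hb : (4 * l./2 + 3 < 2 ^ j.+2)%N.
    by move: hk; rewrite !expnS; lia.
  have c1 := hcoord (j := j.+2) (l := (4 * l./2 + 3)%N) ltac:(lia) ltac:(lia).
  have c2 := hcoord (j := j.+2) (l := (4 * l./2 + 2)%N) ltac:(lia) ltac:(lia).
  have c3 := hcoord (j := j.+2) (l := (4 * l./2 + 1)%N) ltac:(lia) ltac:(lia).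
  apply: cvgD => //; apply: cvgM; first exact: cvgB.
  apply: ratio_cvg; [exact: cvgB| exact: cvgB|].
  rewrite subr_eq0 eq_sym; apply: hreg; lia.
- have hk : (l./2 <= 2 ^ j)%N.
    by move: hl; rewrite -El expnS; lia.
  rewrite (Fw_even x0 hk).
  have -> : (fun x : nat -> nat -> R => Fw x j.+1 l./2.*2) = (fun x => Fw x j l./2).
    by apply: funext => x; rewrite Fw_even.
  apply: IH => //; lia.
Qed.

Lemma Tint_pairE n' (x : nat -> nat -> R) (f : R -> R) :
  Tint n'.+1 x f = \sum_(0 <= k < 2 ^ n') ((Fw x n' k.+1 - Fw x n' k) *
    (ratio00 (x n'.+2 (4 * k + 3)%N - x n'.+2 (4 * k + 2)%N)
             (x n'.+2 (4 * k + 3)%N - x n'.+2 (4 * k + 1)%N) * f (x n'.+2 (4 * k + 1)%N) +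
     (1 - ratio00 (x n'.+2 (4 * k + 3)%N - x n'.+2 (4 * k + 2)%N)
             (x n'.+2 (4 * k + 3)%N - x n'.+2 (4 * k + 1)%N)) * f (x n'.+2 (4 * k + 3)%N))).
Proof.
rewrite /Tint expnS mul2n sum_pair.
apply: eq_big_nat => k /andP[_ hk].
rewrite /Tweight /Tatom.
have -> : (k.*2.+1 - 1 = k.*2)%N by lia.
have -> : (k.*2.+2 - 1 = k.*2.+1)%N by lia.
have -> : (2 * k.*2.+1 - 1 = 4 * k + 1)%N by lia.
have -> : (2 * k.*2.+2 - 1 = 4 * k + 3)%N by lia.
have -> : k.*2.+2 = (k.+1).*2 by [].
rewrite !Fw_even ?(ltnW hk) // Fw_odd //.
ring.
Qed.

Lemma Tint_cvg (f : R -> R) : {within Th, continuous f} ->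
  (fun x => Tint n x f) @ F --> Tint n x0 f.
Proof.
move=> cf.
move: hg0 hgF; rewrite /goodrow => -[g0a g0b] gF.
have [En|[n' En]] : n = 0%N \/ exists n', n = n'.+1.
    by case: (n) => [|n']; [left|right; exists n'].
  rewrite En in g0a g0b gF *.
  have E : forall x : nat -> nat -> R, Tint 0 x f = f (x 1%N 1%N).
    by move=> x; rewrite /Tint /= big_nat1 /Tweight /Tatom /= subr0 mul1r.
  rewrite E; have -> : (fun x => Tint 0 x f) = (fun x => f (x 1%N 1%N)).
    by apply: funext => x; rewrite E.
  apply: comp_within => //.
  - by apply: hcoord; lia.
  - exact: g0a.
  - by apply: filterS gF => x [h _]; apply: h.
rewrite En in g0a g0b gF *.
rewrite Tint_pairE.
have -> : (fun x => Tint n'.+1 x f) = (fun x => \sum_(0 <= k < 2 ^ n') ((Fw x n' k.+1 - Fw x n' k) *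
    (ratio00 (x n'.+2 (4 * k + 3)%N - x n'.+2 (4 * k + 2)%N)
             (x n'.+2 (4 * k + 3)%N - x n'.+2 (4 * k + 1)%N) * f (x n'.+2 (4 * k + 1)%N) +
     (1 - ratio00 (x n'.+2 (4 * k + 3)%N - x n'.+2 (4 * k + 2)%N)
             (x n'.+2 (4 * k + 3)%N - x n'.+2 (4 * k + 1)%N)) * f (x n'.+2 (4 * k + 3)%N)))).
  by apply: funext => x; rewrite Tint_pairE.
apply: cvg_sum_nat => k hk.
have hb : (4 * k + 3 < 2 ^ n'.+2)%N by move: hk; rewrite !expnS; lia.
have n'n : (n' < n)%N by lia.
have e2 : (4 * k + 2 = (4 * k + 1).+1)%N by lia.
have e3 : (4 * k + 3 = (4 * k + 2).+1)%N by lia.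
apply: pair_cvg => //.
- apply: cvgB; apply: Fw_cvg => //; lia.
- by apply: hcoord; lia.
- by apply: hcoord; lia.
- by apply: hcoord; lia.
- by apply: g0a; lia.
- by apply: g0a; lia.
- by rewrite [X in _ <= x0 _ X]e2; apply: g0b; lia.
- by rewrite [X in _ <= x0 _ X]e3; apply: g0b; lia.
- apply: filterS gF => x [ha hb']; split.
  + by apply: ha; lia.
  + by apply: ha; lia.
  + by rewrite [X in _ <= x _ X]e2; apply: hb'; lia.
  + by rewrite [X in _ <= x _ X]e3; apply: hb'; lia.
Qed.

End Main.

Section Pow.
Variable R : realType.

Lemma continuous_abs_powR (p : R) : 1 <= p -> continuous (fun t : R => `|t| `^ p).
Proof.
move=> p1 t.
have p0 : p != 0 by apply/eqP => p0; move: p1; rewrite p0 ler10.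
have [->|t0] := eqVneq t 0.
  apply/cvgrPdist_lt => e e0; apply/nbhs_ballP.
  exists (Num.min 1 e) => /= [|u]; first by rewrite lt_min ltr01 e0.
  rewrite /ball /= sub0r normrN lt_min => /andP[u1 ue].
  rewrite normr0 powR0 // sub0r normrN ger0_norm ?powR_ge0 //.
  have [->|u0] := eqVneq u 0; first by rewrite normr0 powR0.
  apply: le_lt_trans ue; apply: ge1r_powR => //.
  by rewrite normr_gt0 u0 ltW.
have tp : 0 < `|t| by rewrite normr_gt0.
apply: (@cvg_trans _ ((fun u : R => expR (p * ln `|u|)) @ t)).
  apply: near_eq_cvg.
  have := cvgr_neq0 t (@cvg_id _ (nbhs t)) t0.
  move=> /(_ _); apply: filterS => u /= u0.
  by rewrite /powR normr_eq0 (negbTE u0).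
rewrite /powR normr_eq0 (negbTE t0).
apply: (@continuous_comp _ _ _ (fun u : R => p * ln `|u|) expR); last first.
  exact: continuous_expR.
apply: cvgMl_tmp.
have := continuous_comp (@norm_continuous _ R^o t) (continuous_ln tp).
exact.
Qed.

End Pow.

Section Final.
Variable R : realType.

Lemma term_le_sum (h : nat -> R) a b i : (forall k, 0 <= h k) -> (a <= i < b)%N ->
  h i <= \sum_(a <= k < b) h k.
Proof.
move=> h0 hi.
rewrite (bigD1_seq i) /= ?mem_index_iota ?iota_uniq //.
by rewrite lerDl; apply: sumr_ge0.
Qed.

Lemma coord_le n (x y : nat -> nat -> R) j l : (0 < j <= n.+1)%N -> (0 < l < 2 ^ j)%N ->
  `|x j l - y j l| <= arr_dist n x y.
Proof.
move=> hj hl; rewrite /arr_dist -sqrtr_sqr ler_sqrt; last first.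
  by apply: sumr_ge0 => ? _; apply: sumr_ge0 => ? _; exact: sqr_ge0.
apply: le_trans (term_le_sum (i := j) _ _); last 2 first.
- by move=> k; apply: sumr_ge0 => ? _; exact: sqr_ge0.
- lia.
apply: (term_le_sum (h := fun l => (x j l - y j l) ^+ 2)).
  by move=> k; exact: sqr_ge0.
lia.
Qed.

Lemma sba_lift (Th : set R) (G : probability R R) j a i : (0 < j)%N -> (a <= 2 ^ j)%N ->
  sba G Th (j + i) (a * 2 ^ i) = sba G Th j a.
Proof.
move=> j0 ha; elim: i => [|i IH]; first by rewrite addn0 muln1.
rewrite addnS expnS mulnCA mul2n sba_even ?IH //.
  by rewrite addn_gt0 j0.
by rewrite expnD leq_mul2r ha orbT.
Qed.

Lemma RBC_reg (Th : set R) n x : RBC Th n x ->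
  forall j a b, (0 < j <= n)%N -> (0 < a)%N -> (a < b)%N -> (b < 2 ^ j)%N -> x j a != x j b.
Proof.
move=> [G [_ _ reg eqx]] j a b /andP[j0 jn] a0 ab b2.
have ej : n = (j + (n - j))%N by lia.
have p0 : (0 < 2 ^ (n - j))%N by rewrite expn_gt0.
have Ea : sba G Th n (a * 2 ^ (n - j)) = (x j a)%:E.
  rewrite {1}ej sba_lift //; [apply: eqx; lia | lia].
have Eb : sba G Th n (b * 2 ^ (n - j)) = (x j b)%:E.
  rewrite {1}ej sba_lift //; [apply: eqx; lia | lia].
have hb : (b * 2 ^ (n - j) < 2 ^ n)%N.
  by rewrite {2}ej expnD ltn_pmul2r.
have ha : (a * 2 ^ (n - j) < b * 2 ^ (n - j))%N by rewrite ltn_pmul2r.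
have ha0 : (0 < a * 2 ^ (n - j))%N by rewrite muln_gt0 a0.
have h1 : (0 < a * 2 ^ (n - j) < 2 ^ n)%N by rewrite ha0 /= (ltn_trans ha hb).
have h2 : (0 < b * 2 ^ (n - j) < 2 ^ n)%N by rewrite (ltn_trans ha0 ha) hb.
have h3 : (a * 2 ^ (n - j) != b * 2 ^ (n - j))%N by rewrite neq_ltn ha.
have := reg _ _ h1 h2 h3; rewrite Ea Eb.
by apply: contra => /eqP ->.
Qed.

Lemma RBC_good (Th : set R) n x : admissible_Theta Th -> RBC Th n x -> goodrow Th n x.
Proof.
move=> adm [G [supp fm reg eqx]]; split.
- move=> k hk; apply: (sba_inTh adm supp fm (j := n.+1) (l := k)) => //.
    lia.
  apply: eqx; lia.
- move=> k k0 hk.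
  have := sba_sorted adm supp fm (j := n.+1) isT (l := k) ltac:(lia).
  by rewrite !eqx ?lee_fin //; lia.
Qed.

Variable Th : set R.
Hypothesis adm : admissible_Theta Th.
Variable n : nat.
Variable x0 : nat -> nat -> R.
Hypothesis rbc0 : RBC Th n x0.

Definition Bd (d : R) := [set x | RBC Th n x /\ arr_dist n x x0 < d].
Definition FF0 := filter_from [set d : R | 0 < d] Bd.

Local Instance FF0_filter : Filter FF0.
Proof.
apply: filter_from_filter; first by exists (1 : R) => /=.
move=> i j i0 j0; exists (Num.min i j); first by rewrite /= lt_min i0 j0.
move=> x [rx hx]; move: hx; rewrite /= lt_min => /andP[xi xj].
by split; split.
Qed.

Lemma F_coord j l : (0 < j <= n.+1)%N -> (0 < l < 2 ^ j)%N ->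
  (fun x => x j l) @ FF0 --> x0 j l.
Proof.
move=> hj hl; apply/cvgrPdist_lt => e e0.
exists e => // x [_ hx] /=; rewrite distrC.
exact: le_lt_trans (coord_le _ _ hj hl) hx.
Qed.

Lemma F_good : \forall x \near FF0, goodrow Th n x.
Proof. by exists (1 : R) => /= [|x [rx _]]; [exact: ltr01|exact: RBC_good]. Qed.

Lemma F_Tint (f : R -> R) : {within Th, continuous f} ->
  (fun x => Tint n x f) @ FF0 --> Tint n x0 f.
Proof.
move=> cf; apply: Tint_cvg => //.
- exact: F_coord.
- exact: (RBC_reg rbc0).
- exact: (RBC_good adm rbc0).
- exact: F_good.
Qed.

Lemma F_near (f : R -> R) e : {within Th, continuous f} -> 0 < e ->
  \forall x \near FF0, `|Tint n x f - Tint n x0 f| < e.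
Proof.
move=> cf e0; have /cvgrPdist_lt /(_ e e0) := F_Tint cf.
by apply: filterS => x; rewrite distrC.
Qed.

End Final.


Unset Implicit Arguments. Set Strict Implicit.

Theorem lemma8 (R : realType) (Th : set R) (n : nat) :
  admissible_Theta Th ->
  (* (i) continuity into P(Theta) with the weak topology *)
  (forall x0 : nat -> nat -> R, RBC Th n x0 ->
    forall (m : nat) (f : 'I_m -> R -> R) (eps : 'I_m -> R),
      (forall i, {within Th, continuous (f i)} /\ bounded_on Th (f i)) ->
      (forall i, 0 < eps i) ->
      exists2 d : R, 0 < d &
        forall x, RBC Th n x -> arr_dist n x x0 < d ->
          forall i, `|Tint n x (f i) - Tint n x0 (f i)| < eps i)
  /\
  (* (ii) continuity into P_p(Theta) with the p-Wasserstein-type topology *)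
  (forall p : R, 1 <= p ->
   forall x0 : nat -> nat -> R, RBC Th n x0 ->
    forall (m : nat) (f : 'I_m -> R -> R) (eps : 'I_m -> R)
           (use_moment : bool) (eps0 : R),
      (forall i, {within Th, continuous (f i)} /\ bounded_on Th (f i)) ->
      (forall i, 0 < eps i) -> 0 < eps0 ->
      exists2 d : R, 0 < d &
        forall x, RBC Th n x -> arr_dist n x x0 < d ->
          (forall i, `|Tint n x (f i) - Tint n x0 (f i)| < eps i) /\
          (use_moment ->
            `|Tint n x (fun t => `|t| `^ p) - Tint n x0 (fun t => `|t| `^ p)| < eps0)).
Proof.
move=> adm; split.
- move=> x0 rbc0 m f eps hf heps.
  have H : forall i, \forall x \near FF0 Th n x0, `|Tint n x (f i) - Tint n x0 (f i)| < eps i.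
    by move=> i; apply: F_near => //; case: (hf i).
  have [d d0 hd] := filter_forall (FF0_filter Th n x0) H.
  by exists d => // x rx dx i; apply: (hd x (conj rx dx)).
- move=> p p1 x0 rbc0 m f eps um eps0 hf heps heps0.
  have H : forall i, \forall x \near FF0 Th n x0, `|Tint n x (f i) - Tint n x0 (f i)| < eps i.
    by move=> i; apply: F_near => //; case: (hf i).
  have H0 : \forall x \near FF0 Th n x0,
      `|Tint n x (fun t => `|t| `^ p) - Tint n x0 (fun t => `|t| `^ p)| < eps0.
    apply: F_near => //.
    by apply: continuous_subspaceT; exact: continuous_abs_powR.
  have FF := FF0_filter Th n x0.
  have [d d0 hd] := filterI (filter_forall FF H) H0.
  exists d => // x rx dx; have [h1 h2] := hd x (conj rx dx).
  by split => // _.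
Qed.
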